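(* Let $\lambda>0$ and let $\mu(t)$ solve $\dot\mu=-\mu\,(\mathcal K_\mu+\lambda I)^{-1}\mathcal K_\mu\frac{\delta F}{\delta\mu}[\mu]$. Then for every $0\le s\le1$, $$\frac{d}{dt}F(\mu(t))\le-\Big\|\frac{\delta F}{\delta\mu}[\mu_t]\Big\|^2_{L^2_{\mu_t}}+\lambda^s\Big\|(\mathcal K_{\mu_t}+\lambda I)^{-s/2}\frac{\delta F}{\delta\mu}[\mu_t]\Big\|^2_{L^2_{\mu_t}}.$$
   Context: $k$: symmetric positive definite bounded kernel; $\mathcal K_\mu f(x)=\int k(x,x')f(x')d\mu(x')$ is a compact positive self-adjoint operator on $L^2_\mu$ with spectral decomposition (eigenvalues $\sigma_j\ge0$, orthonormal eigenbasis $e_j$), and powers are defined spectrally. $\frac{\delta F}{\delta\mu}$: first variation, assumed in $L^2_\mu$; $\frac{d}{dt}F(\mu(t))=\int\frac{\delta F}{\delta\mu}d\dot\mu$. *)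

(* Defs.v *)
From HB Require Import structures.
From mathcomp Require Import all_boot all_order all_algebra.
From mathcomp Require Import all_classical all_reals all_analysis.
Set Implicit Arguments. Unset Strict Implicit. Unset Printing Implicit Defensive.
Import Order.TTheory GRing.Theory Num.Theory.
Import numFieldNormedType.Exports.
Local Open Scope classical_set_scope.
Local Open Scope ring_scope.

Section Defs.
Context d (T : measurableType d) (R : realType).

Definition L2 (mu : {measure set T -> \bar R}) (f : T -> R) : Prop :=
  measurable_fun setT f /\ (\int[mu]_x ((f x) ^+ 2)%:E < +oo)%E.

Definition ip (mu : {measure set T -> \bar R}) (f g : T -> R) : R :=
  \int[mu]_x (f x * g x).

Definition L2norm2 (mu : {measure set T -> \bar R}) (f : T -> R) : R :=
  \int[mu]_x ((f x) ^+ 2).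

Definition Kop (k : T -> T -> R) (mu : {measure set T -> \bar R}) (f : T -> R) : T -> R :=
  fun x => \int[mu]_y (k x y * f y).

Definition sym_pd_bounded_kernel (k : T -> T -> R) : Prop :=
  measurable_fun setT (fun p : T * T => k p.1 p.2) /\
  (forall x y, k x y = k y x) /\
  (forall (n : nat) (x : 'I_n -> T) (c : 'I_n -> R),
      0 <= \sum_(i < n) \sum_(j < n) c i * c j * k (x i) (x j)) /\
  (exists M : R, forall x y, `|k x y| <= M).

Definition spectral_decomposition (k : T -> T -> R) (mu : {measure set T -> \bar R})
    (I : Type) (sigma : I -> R) (e : I -> T -> R) : Prop :=
  (forall i, 0 <= sigma i) /\
  (forall i, L2 mu (e i)) /\
  (forall i j, i = j -> ip mu (e i) (e j) = 1) /\
  (forall i j, i <> j -> ip mu (e i) (e j) = 0) /\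
  (forall i, {ae mu, forall x, Kop k mu (e i) x = sigma i * e i x}) /\
  (forall f, L2 mu f -> (forall i, ip mu f (e i) = 0) ->
     {ae mu, forall x, f x = 0}).

(* h represents phi(K_mu) f, defined spectrally: <h, e_i> = phi(sigma_i) <f, e_i> *)
Definition spectral_apply (mu : {measure set T -> \bar R}) (I : Type)
    (sigma : I -> R) (e : I -> T -> R) (phi : R -> R) (f h : T -> R) : Prop :=
  L2 mu h /\ forall i, ip mu h (e i) = phi (sigma i) * ip mu f (e i).

(* the curve mu has, at time t, setwise derivative the signed measure rho mu_t,
   i.e. d/dt mu_tau(A) |_{tau=t} = int_A rho dmu_t for every measurable A *)
Definition measure_deriv_density (mu : R -> {finite_measure set T -> \bar R})
    (t : R) (rho : T -> R) : Prop :=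
  forall A, measurable A ->
    is_derive t 1 (fun tau => fine (mu tau A)) (\int[mu t]_(x in A) rho x).

End Defs.

(* Main.v *)
Require Import Defs.
From HB Require Import structures.
From mathcomp Require Import all_boot all_order all_algebra.
From mathcomp Require Import all_classical all_reals all_analysis.
From mathcomp Require Import measurable_realfun ring lra.
Set Implicit Arguments. Unset Strict Implicit. Unset Printing Implicit Defensive.
Import Order.TTheory GRing.Theory Num.Theory.
Import numFieldNormedType.Exports.
Local Open Scope classical_set_scope.
Local Open Scope ring_scope.

Lemma le_abs_mul (R : realType) (a b : R) : `|a * b| <= a ^+ 2 + b ^+ 2.
Proof.
rewrite normrM -(real_normK (num_real a)) -(real_normK (num_real b)).
have ha := normr_ge0 a; have hb := normr_ge0 b.
set x := `|a|; set y := `|b|; nra.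
Qed.

Section Basics.
Context d (T : measurableType d) (R : realType) (mu : {measure set T -> \bar R}).

Lemma L2P (f : T -> R) : L2 mu f <->
  measurable_fun setT f /\ mu.-integrable setT (EFin \o (fun x => f x ^+ 2)).
Proof.
split=> [[mf fi]|[mf /integrableP[_ fi]]]; split => //.
  apply/integrableP; split.
    apply/measurable_EFinP; exact: measurable_funX.
  apply: le_lt_trans fi; rewrite le_eqVlt; apply/orP; left; apply/eqP.
  by apply: eq_integral => x _ /=; rewrite ger0_norm// sqr_ge0.
apply: le_lt_trans fi; rewrite le_eqVlt; apply/orP; left; apply/eqP.
by apply: eq_integral => x _ /=; rewrite ger0_norm// sqr_ge0.
Qed.

Lemma L2_meas f : L2 mu f -> measurable_fun setT f.
Proof. by case. Qed.

Lemma L2_int2 f : L2 mu f -> mu.-integrable setT (EFin \o (fun x => f x ^+ 2)).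
Proof. by move/L2P=> []. Qed.

Lemma L2_mul f g : L2 mu f -> L2 mu g ->
  mu.-integrable setT (EFin \o (fun x => f x * g x)).
Proof.
move=> /L2P[mf if2] /L2P[mg ig2].
apply: (le_integrable measurableT (g := EFin \o (fun x => f x ^+ 2 + g x ^+ 2))).
- by apply/measurable_EFinP; exact: measurable_funM.
- move=> x _ /=; rewrite lee_fin (le_trans (le_abs_mul _ _))//.
  exact: ler_norm.
- apply: (eq_integrable measurableT (fun x => (f x ^+ 2)%:E + (g x ^+ 2)%:E)%E).
    by move=> x _; rewrite /= EFinD.
  exact: (integrableD measurableT if2 ig2).
Qed.

Lemma L2_0 : L2 mu (fun _ => 0).
Proof.
split; first exact: measurable_cst.
by rewrite expr0n /= integral0 ltry.
Qed.

Lemma L2D f g : L2 mu f -> L2 mu g -> L2 mu (fun x => f x + g x).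
Proof.
move=> hf hg; apply/L2P; split.
  by apply: measurable_funD; [exact: L2_meas|exact: L2_meas].
have ifg := L2_mul hf hg.
have := integrableD measurableT (integrableD measurableT (L2_int2 hf) (integrableZl measurableT 2 ifg)) (L2_int2 hg).
apply: eq_integrable => // x _ /=.
by rewrite (_ : 2%E = 2%:E)// -EFinM -!EFinD; congr (_%:E); ring.
Qed.

Lemma L2Z a f : L2 mu f -> L2 mu (fun x => a * f x).
Proof.
move=> hf; apply/L2P; split.
  by apply: measurable_funM => //; exact: L2_meas.
have := integrableZl measurableT (a ^+ 2) (L2_int2 hf).
apply: eq_integrable => // x _ /=.
by rewrite -EFinM; congr (_%:E); ring.
Qed.

Lemma L2B f g : L2 mu f -> L2 mu g -> L2 mu (fun x => f x - g x).
Proof.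
move=> hf hg; rewrite (_ : (fun x => f x - g x) = fun x => f x + (-1) * g x).
  exact: L2D hf (L2Z (-1) hg).
by apply: funext => x; ring.
Qed.

Lemma L2_sum (I : Type) (s : seq I) (a : I -> R) (e : I -> T -> R) :
  (forall i, L2 mu (e i)) -> L2 mu (fun x => \sum_(i <- s) a i * e i x).
Proof.
move=> he; elim: s => [|i s ih].
  by under eq_fun do rewrite big_nil; exact: L2_0.
under eq_fun do rewrite big_cons.
exact: L2D (L2Z _ (he i)) ih.
Qed.

Lemma ipC f g : ip mu f g = ip mu g f.
Proof. by apply: eq_Rintegral => x _; rewrite mulrC. Qed.

Lemma ipDl f1 f2 g : L2 mu f1 -> L2 mu f2 -> L2 mu g ->
  ip mu (fun x => f1 x + f2 x) g = ip mu f1 g + ip mu f2 g.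
Proof.
move=> h1 h2 hg; rewrite /ip -RintegralD//; last 2 first.
- exact: L2_mul.
- exact: L2_mul.
by apply: eq_Rintegral => x _; rewrite mulrDl.
Qed.

Lemma ipZl a f g : L2 mu f -> L2 mu g ->
  ip mu (fun x => a * f x) g = a * ip mu f g.
Proof.
move=> hf hg; rewrite /ip -RintegralZl//; last exact: L2_mul.
by apply: eq_Rintegral => x _; rewrite mulrA.
Qed.

Lemma ipBl f1 f2 g : L2 mu f1 -> L2 mu f2 -> L2 mu g ->
  ip mu (fun x => f1 x - f2 x) g = ip mu f1 g - ip mu f2 g.
Proof.
move=> h1 h2 hg; rewrite /ip -RintegralB//; last 2 first.
- exact: L2_mul.
- exact: L2_mul.
by apply: eq_Rintegral => x _; rewrite mulrBl.
Qed.

Lemma ip_suml (I : Type) (s : seq I) (a : I -> R) (e : I -> T -> R) g :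
  (forall i, L2 mu (e i)) -> L2 mu g ->
  ip mu (fun x => \sum_(i <- s) a i * e i x) g = \sum_(i <- s) a i * ip mu (e i) g.
Proof.
move=> he hg; elim: s => [|i s ih].
  rewrite big_nil /ip; under eq_Rintegral do rewrite big_nil mul0r.
  by rewrite Rintegral_cst// mul0r.
rewrite big_cons -ih -ipZl// -ipDl//; last 2 first.
- exact: L2Z.
- exact: L2_sum.
by apply: eq_Rintegral => x _; rewrite big_cons.
Qed.

Lemma L2norm2_ip f : L2norm2 mu f = ip mu f f.
Proof. by apply: eq_Rintegral => x _; rewrite expr2. Qed.

Lemma ip_ge0 f : 0 <= ip mu f f.
Proof. by apply: Rintegral_ge0 => x _; rewrite -expr2 sqr_ge0. Qed.

End Basics.

Section Ortho.
Context d (T : measurableType d) (R : realType) (mu : {measure set T -> \bar R}).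

Lemma ipBr f g1 g2 : L2 mu f -> L2 mu g1 -> L2 mu g2 ->
  ip mu f (fun x => g1 x - g2 x) = ip mu f g1 - ip mu f g2.
Proof. by move=> hf h1 h2; rewrite ipC ipBl// (ipC mu g1) (ipC mu g2). Qed.

Lemma ipZr a f g : L2 mu f -> L2 mu g ->
  ip mu f (fun x => a * g x) = a * ip mu f g.
Proof. by move=> hf hg; rewrite ipC ipZl// ipC. Qed.

Lemma ip_AMGM f g t : L2 mu f -> L2 mu g -> 0 < t ->
  2 * ip mu f g <= t * ip mu f f + ip mu g g / t.
Proof.
move=> hf hg t0.
have h := ip_ge0 mu (fun x => t * f x - g x).
have htf := L2Z t hf.
rewrite ipBl// in h; last exact: L2B.
rewrite !ipBr// in h.
rewrite ?ipZl// ?ipZr// ?ipZl// (ipC mu g f) in h.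
move: h; set A := ip mu f f; set B := ip mu f g; set C := ip mu g g => h.
have h2 : 0 <= (t * (t * A) - t * B - (t * B - C)) / t by apply: divr_ge0; [exact: h | exact: ltW].
have -> : t * A + C / t = (t * (t * A) - t * B - (t * B - C)) / t + 2 * B.
  by field; rewrite gt_eqF.
by rewrite lerDr.
Qed.

Variables (I : eqType) (e : I -> T -> R).
Hypothesis heL2 : forall i, L2 mu (e i).
Hypothesis hee1 : forall i, ip mu (e i) (e i) = 1.
Hypothesis hee0 : forall i j, i != j -> ip mu (e i) (e j) = 0.

Definition comb (js : seq I) (a : I -> R) := fun x => \sum_(j <- js) a j * e j x.
Definition coef f j := ip mu f (e j).

Lemma L2_comb js a : L2 mu (comb js a).
Proof. exact: L2_sum. Qed.

Lemma ip_comb_e js a i : uniq js ->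
  ip mu (comb js a) (e i) = if i \in js then a i else 0.
Proof.
move=> ujs; rewrite /comb ip_suml//.
elim: js ujs => [|j js ih] /=; first by rewrite big_nil.
move=> /andP[jn ujs]; rewrite big_cons in_cons ih//.
have [->|ij] := eqVneq i j.
  by rewrite hee1 mulr1 (negbTE jn) addr0.
by rewrite hee0 1?eq_sym// mulr0 add0r.
Qed.

Lemma ip_comb_comb js a b : uniq js ->
  ip mu (comb js a) (comb js b) = \sum_(j <- js) a j * b j.
Proof.
move=> ujs; rewrite /comb ip_suml//; last exact: L2_comb.
by apply: eq_big_seq => j hj; rewrite ipC ip_comb_e// hj.
Qed.

Lemma ip_comb_f js a f : L2 mu f ->
  ip mu (comb js a) f = \sum_(j <- js) a j * coef f j.
Proof.
move=> hf; rewrite /comb ip_suml//.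
by apply: eq_bigr => j _; rewrite ipC.
Qed.

Lemma bessel_eq js f : uniq js -> L2 mu f ->
  L2norm2 mu (fun x => f x - comb js (coef f) x) =
  L2norm2 mu f - \sum_(j <- js) coef f j ^+ 2.
Proof.
move=> ujs hf; have hS := L2_comb js (coef f).
rewrite !L2norm2_ip ipBl// ?ipBr//; last exact: L2B.
rewrite ip_comb_f// ip_comb_comb// (ipC mu f) ip_comb_f//.
rewrite [X in _ = _ - X](eq_bigr (fun j => coef f j * coef f j)); last by move=> j _; rewrite expr2.
ring.
Qed.

Lemma bessel js f : uniq js -> L2 mu f ->
  \sum_(j <- js) coef f j ^+ 2 <= L2norm2 mu f.
Proof.
move=> ujs hf; rewrite -subr_ge0 -bessel_eq// L2norm2_ip; exact: ip_ge0.
Qed.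

Lemma coef_sqr_le f i : L2 mu f -> coef f i ^+ 2 <= L2norm2 mu f.
Proof. by move=> hf; have := @bessel [:: i] f (erefl true) hf; rewrite big_seq1. Qed.

Lemma coef_comb_sub js a f i : uniq js -> L2 mu f ->
  coef (fun x => f x - comb js a x) i = coef f i - if i \in js then a i else 0.
Proof. by move=> ujs hf; rewrite /coef ipBl// ?ip_comb_e//; exact: L2_comb. Qed.

End Ortho.

Lemma limsup_bound (R : realType) (u : nat -> R) (k : nat) (a b : R) :
  (forall n, (k <= n)%N -> a <= u n <= b) ->
  a <= fine (limn_esup (fun n => (u n)%:E)) <= b.
Proof.
move=> hu.
have hab : a <= b by have /andP[h1 h2] := hu k (leqnn k); exact: le_trans h2.
have hle : (limn_esup (fun n => (u n)%:E) <= b%:E)%E.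
  rewrite limn_esup_lim; apply: lime_le; first exact: is_cvg_esups.
  exists k => // n /= kn; apply: ge_ereal_sup => _ [m /= nm <-].
  by rewrite lee_fin; have /andP[] := hu m (leq_trans kn nm).
have hge : (a%:E <= limn_esup (fun n => (u n)%:E))%E.
  rewrite limn_esup_lim; apply: lime_ge; first exact: is_cvg_esups.
  exists k => // n /= kn; apply: le_trans (ereal_sup_ubound _); last first.
    by exists n => /=.
  by rewrite lee_fin; have /andP[] := hu n kn.
move: hle hge; case: (limn_esup _) => [r| |] //=; by rewrite !lee_fin => -> ->.
Qed.

Lemma abs_le_of_sqr (R : realType) (x y : R) : 0 <= y -> x ^+ 2 <= y ^+ 2 -> `|x| <= y.
Proof.
move=> y0; rewrite -(real_normK (num_real x)) => h.
have a0 := normr_ge0 x; move: h; set a := `|x| => h.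
rewrite leNgt; apply/negP => hlt; nra.
Qed.

Lemma tele_bound (R : realType) (u : nat -> R) (c : R) k :
  (forall m, `|u m.+1 - u m| <= c * (2^-1) ^+ m) ->
  forall j, `|u (k + j)%N - u k| <= 2 * c * (2^-1) ^+ k.
Proof.
move=> hu.
have c0 : 0 <= c.
  have := le_trans (normr_ge0 _) (hu 0%N); rewrite expr0 mulr1; exact.
suff H : forall j, `|u (k + j)%N - u k| <= 2 * c * (2^-1) ^+ k * (1 - (2^-1) ^+ j).
  move=> j; apply: le_trans (H j) _; rewrite -[X in _ <= X]mulr1 ler_wpM2l//.
    by rewrite !mulr_ge0// exprn_ge0// invr_ge0.
elim=> [|j ih]; first by rewrite addn0 subrr normr0 expr0 subrr mulr0.
rewrite addnS (_ : u (k + j).+1 - u k = (u (k + j).+1 - u (k + j)%N) + (u (k + j)%N - u k)); last by ring.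
apply: le_trans (ler_normD _ _) _.
apply: le_trans (lerD (hu _) ih) _.
rewrite le_eqVlt; apply/orP; left; apply/eqP.
by rewrite exprD exprS; field.
Qed.

Lemma sqrt_bound (R : realType) (D h : R) (m : nat) :
  4 ^+ m * D ^+ 2 <= h -> `|D| <= Num.sqrt h * (2^-1) ^+ m.
Proof.
move=> hh.
have h0 : 0 <= h by apply: le_trans hh; rewrite mulr_ge0 ?sqr_ge0// exprn_ge0.
apply: abs_le_of_sqr.
  by rewrite mulr_ge0 ?sqrtr_ge0// exprn_ge0// invr_ge0.
rewrite exprMn sqr_sqrtr// -exprM mulnC exprM.
have q : (2^-1 : R) ^+ 2 = 4^-1 by field.
by rewrite q exprVn ler_pdivlMr ?exprn_gt0// mulrC.
Qed.

Lemma geo_partial (R : realType) n :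
  \sum_(0 <= i < n) ((2^-1 : R) ^+ i) = 2 - 2 * (2^-1) ^+ n.
Proof.
elim: n => [|n ih]; first by rewrite big_nil expr0 mulr1 subrr.
by rewrite big_nat_recr//= ih exprS; field.
Qed.

Lemma geo_eseries_le (R : realType) :
  (\sum_(i <oo) (((2^-1 : R) ^+ i)%:E) <= 2%:E)%E.
Proof.
apply: lime_le.
  by apply: is_cvg_nneseries => n _ _; rewrite lee_fin exprn_ge0// invr_ge0.
exists 0%N => // n _ /=; rewrite sumEFin lee_fin geo_partial gerDl oppr_le0.
by rewrite mulr_ge0// exprn_ge0// invr_ge0.
Qed.

Section Limit.
Context d (T : measurableType d) (R : realType) (mu : {measure set T -> \bar R}).

Lemma L2_limit (S : nat -> T -> R) :
  (forall k, L2 mu (S k)) ->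
  (forall k, L2norm2 mu (fun x => S k.+1 x - S k x) <= (8^-1) ^+ k) ->
  exists G, L2 mu G /\
    forall k, L2norm2 mu (fun x => G x - S k x) <= 8 * (4^-1) ^+ k.
Proof.
move=> hS hD.
pose D m x := S m.+1 x - S m x.
have hDL2 m : L2 mu (D m) by apply: L2B.
pose f m x := ((4 ^+ m * D m x ^+ 2)%:E : \bar R).
have f0 m x : (0 <= f m x)%E by rewrite lee_fin mulr_ge0 ?sqr_ge0// exprn_ge0.
have mf m : measurable_fun setT (f m).
  apply/measurable_EFinP; apply: measurable_funM => //.
  exact: measurable_funX (L2_meas (hDL2 m)).
pose H x := (\sum_(m <oo) f m x)%E.
have H0 x : (0 <= H x)%E by apply: nneseries_ge0 => n _ _.
have mH : measurable_fun setT H.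
  by apply: ge0_emeasurable_sum => // k x _ _.
have intH : (\int[mu]_x H x <= 2%:E)%E.
  rewrite integral_nneseries//.
  apply: (le_trans _ (geo_eseries_le R)).
  apply: lee_nneseries => [m _ _|m _]; first exact: integral_ge0.
  rewrite /f; under eq_integral do rewrite EFinM.
  rewrite ge0_integralZl_EFin//; last 2 first.
  - by move=> x _; rewrite lee_fin sqr_ge0.
  - by apply/measurable_EFinP; exact: measurable_funX (L2_meas (hDL2 m)).
  have [_ fin] := hDL2 m.
  have := hD m; rewrite /L2norm2 /Rintegral -/(D m).
  rewrite -lee_fin fineK; last first.
    by rewrite ge0_fin_numE// integral_ge0// => x _; rewrite lee_fin sqr_ge0.
  move=> h; apply: le_trans (lee_wpmul2l _ h) _.
    by rewrite lee_fin exprn_ge0.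
  rewrite -EFinM lee_fin -exprMn.
  by have -> : (4 : R) * 8^-1 = 2^-1 by field.
pose G x := fine (limn_esup (fun n => (S n x)%:E)).
have mG : measurable_fun setT G.
  apply: measurableT_comp; first exact: fine_measurable.
  by apply: measurable_fun_limn_esup => n; apply/measurable_EFinP; exact: L2_meas.
have key k x : (((G x - S k x) ^+ 2)%:E <= (4 * (4^-1) ^+ k)%:E * H x)%E.
  case Hx : (H x) => [r| |]; last by have := H0 x; rewrite Hx.
    have hm m : 4 ^+ m * D m x ^+ 2 <= r.
      have hle : (\sum_(0 <= i < m.+1) f i x <= H x)%E by exact: nneseries_lim_ge.
      move: hle; rewrite Hx big_nat_recr//= sumEFin -EFinD lee_fin.
      apply: le_trans; rewrite lerDr.
      by apply: sumr_ge0 => i _; rewrite mulr_ge0 ?sqr_ge0// exprn_ge0.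
    have hDm m : `|S m.+1 x - S m x| <= Num.sqrt r * (2^-1) ^+ m.
      exact: sqrt_bound (hm m).
    have tb := tele_bound (u := fun n => S n x) k hDm.
    set b := 2 * Num.sqrt r * (2^-1) ^+ k in tb.
    have /andP[hG1 hG2] : S k x - b <= G x <= S k x + b.
      apply: (@limsup_bound R (fun n => S n x) k) => n kn.
      have := tb (n - k)%N; rewrite subnKC// ler_norml => /andP[h1 h2].
      by apply/andP; split; lra.
    have hb : `|G x - S k x| <= b.
      by rewrite ler_norml; apply/andP; split; lra.
    have hb2 : (G x - S k x) ^+ 2 <= b ^+ 2.
      rewrite -(real_normK (num_real (G x - S k x))).
      have := normr_ge0 (G x - S k x); nra.
    rewrite -EFinM lee_fin; apply: le_trans hb2 _.
    have h0 : 0 <= r by have := H0 x; rewrite Hx lee_fin.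
    rewrite /b !exprMn sqr_sqrtr// -exprM mulnC exprM.
    rewrite le_eqVlt; apply/orP; left; apply/eqP.
    rewrite (_ : (2^-1 : R) ^+ 2 = 4^-1); last by field.
    ring.
  rewrite gt0_muley ?leey// lte_fin mulr_gt0// exprn_gt0//.
have intHk (c : R) : 0 <= c -> (\int[mu]_x ((c%:E * H x)%E) <= (c * 2)%:E)%E.
  move=> c0; rewrite ge0_integralZl// ?lee_fin// EFinM.
  by apply: lee_wpmul2l; rewrite ?lee_fin.
have msq k : measurable_fun setT (fun x => (((G x - S k x) ^+ 2)%:E : \bar R)).
  apply/measurable_EFinP; apply: measurable_funX; apply: measurable_funB => //.
  exact: L2_meas.
have hI k : (\int[mu]_x (((G x - S k x) ^+ 2)%:E) <= (8 * (4^-1) ^+ k)%:E)%E.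
  apply: le_trans (ge0_le_integral mu measurableT (f2 := fun x => ((4 * (4^-1) ^+ k)%:E * H x)%E) _ (msq k) _ _) _.
  - by move=> x _; rewrite lee_fin sqr_ge0.
  - by apply: emeasurable_funM => //; exact: measurable_cst.
  - by move=> x _; exact: key.
  apply: le_trans (intHk _ _) _; first by rewrite mulr_ge0// exprn_ge0.
  by rewrite lee_fin le_eqVlt; apply/orP; left; apply/eqP; ring.
exists G; split; last first.
  move=> k; have := hI k; rewrite /L2norm2 /Rintegral.
  have : (0 <= \int[mu]_x (((G x - S k x) ^+ 2)%:E))%E.
    by apply: integral_ge0 => x _; rewrite lee_fin sqr_ge0.
  by case: (\int[mu]_x _)%E => [r| |] //=; rewrite !lee_fin.
split => //.
have [_ fin0] := hS 0%N.
apply: le_lt_trans (ge0_le_integral mu measurableT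
   (f2 := fun x => ((2 * S 0%N x ^+ 2)%:E + 8%:E * H x)%E) _ _ _ _) _.
- by move=> x _; rewrite lee_fin sqr_ge0.
- by apply/measurable_EFinP; exact: measurable_funX.
- apply: emeasurable_funD => //.
    apply/measurable_EFinP; apply: measurable_funM => //.
    exact: measurable_funX (L2_meas (hS 0%N)).
  by apply: emeasurable_funM => //; exact: measurable_cst.
- move=> x _; have := key 0%N x; rewrite expr0 mulr1 => k0.
  apply: (@le_trans _ _ ((2 * S 0%N x ^+ 2)%:E + 2%:E * ((G x - S 0%N x) ^+ 2)%:E)%E).
    rewrite -EFinM -EFinD lee_fin.
    have := sqr_ge0 (G x - 2 * S 0%N x); nra.
  rewrite leeD2l// (_ : 8%:E = 2%:E * 4%:E)%E; last by rewrite -EFinM; congr (_%:E); ring.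
  by rewrite -muleA; apply: lee_wpmul2l; rewrite ?lee_fin.
rewrite ge0_integralD//; last 4 first.
- by move=> x _; rewrite lee_fin mulr_ge0// sqr_ge0.
- apply/measurable_EFinP; apply: measurable_funM => //.
  exact: measurable_funX (L2_meas (hS 0%N)).
- by move=> x _; rewrite mule_ge0// lee_fin.
- by apply: emeasurable_funM => //; exact: measurable_cst.
apply: lte_add_pinfty.
  under eq_integral do rewrite EFinM.
  rewrite ge0_integralZl_EFin//; last 2 first.
  - by move=> x _; rewrite lee_fin sqr_ge0.
  - by apply/measurable_EFinP; exact: measurable_funX (L2_meas (hS 0%N)).
  by rewrite lte_mul_pinfty.
apply: le_lt_trans (intHk _ _) _; first by [].
exact: ltry.
Qed.
End Limit.

Lemma nat_le_pow4 (R : realType) (n : nat) : (n%:R : R) <= 4 ^+ n.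
Proof.
elim: n => [|n ih]; first by rewrite expr0 ler01.
have h1 : (1 : R) <= 4 ^+ n by apply: exprn_ege1; lra.
by rewrite -natr1 exprS; lra.
Qed.

Lemma small_le0 (R : realType) (x C : R) :
  (forall k, x <= C * (4^-1) ^+ k) -> x <= 0.
Proof.
move=> h; rewrite leNgt; apply/negP => x0.
have C0 : 0 < C by have := h 0%N; rewrite expr0 mulr1; exact: lt_le_trans.
have hCx : 0 <= C / x by rewrite divr_ge0// ltW.
set n := Num.Def.archi_bound (C / x).
have hn := archi_boundP hCx; rewrite -/n in hn.
have := h n; rewrite exprVn => hx.
have h4 : 0 < (4 : R) ^+ n by rewrite exprn_gt0.
have : x * 4 ^+ n <= C by rewrite -ler_pdivlMr// mulrC.
have := nat_le_pow4 R n.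
move: hn; rewrite ltr_pdivrMr// => hn.
nra.
Qed.

Lemma sum_subset_le (R : realType) (I : eqType) (s1 s2 : seq I) (F : I -> R) :
  uniq s1 -> uniq s2 -> {subset s1 <= s2} -> (forall i, 0 <= F i) ->
  \sum_(i <- s1) F i <= \sum_(i <- s2) F i.
Proof.
move=> u1 u2 sub F0.
rewrite [X in _ <= X](bigID (mem s1)) /=.
have -> : \sum_(i <- s2 | true && (i \in s1)) F i = \sum_(i <- s1) F i.
  rewrite -big_filter (perm_big s1)//.
  apply: uniq_perm => //; first exact: filter_uniq.
  by move=> i; rewrite mem_filter /=; apply/andP/idP => [[]//|hi]; split=> //; exact: sub.
by rewrite lerDl sumr_ge0.

Qed.

Lemma pow8_le_pow4 (R : realType) k : ((8^-1 : R) ^+ k) <= (4^-1) ^+ k.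
Proof.
elim: k => [|k ih]; first by rewrite !expr0.
rewrite !exprS; apply: ler_pM => //; last by rewrite lef_pV2 ?posrE//; lra.
Qed.

Section Nest.
Variables (I : eqType) (ch : nat -> seq I).
Fixpoint nest k := if k is k'.+1 then nest k' ++ [seq j <- ch k | j \notin nest k'] else ch 0%N.

Lemma nest_uniq k : (forall n, uniq (ch n)) -> uniq (nest k).
Proof.
move=> hu; elim: k => [|k ih] //=; rewrite cat_uniq ih filter_uniq// andbT /=.
by apply/hasPn => j; rewrite mem_filter => /andP[].
Qed.

Lemma nest_sub k : {subset ch k <= nest k}.
Proof.
case: k => [//|k] j hj /=; rewrite mem_cat mem_filter hj andbT.
by case: (j \in nest k).
Qed.

Lemma nest_mono k n : (k <= n)%N -> {subset nest k <= nest n}.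
Proof.
elim: n => [|n ih]; first by rewrite leqn0 => /eqP ->.
rewrite leq_eqVlt => /predU1P[->//|]; rewrite ltnS => /ih h j hj /=.
by rewrite mem_cat (h _ hj).
Qed.
End Nest.

Section Parseval.
Context d (T : measurableType d) (R : realType) (mu : {measure set T -> \bar R}).
Variables (I : eqType) (e : I -> T -> R).
Hypothesis heL2 : forall i, L2 mu (e i).
Hypothesis hee1 : forall i, ip mu (e i) (e i) = 1.
Hypothesis hee0 : forall i j, i != j -> ip mu (e i) (e j) = 0.
Hypothesis hcompl : forall f, L2 mu f -> (forall i, ip mu f (e i) = 0) ->
  {ae mu, forall x, f x = 0}.

Lemma parseval_approx f : L2 mu f -> forall eps, 0 < eps ->
  exists js, uniq js /\
    L2norm2 mu (fun x => f x - comb e js (coef mu e f) x) <= eps.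
Proof.
move=> hf eps eps0.
pose c := coef mu e f.
pose A := [set r : R | exists js, uniq js /\ r = \sum_(j <- js) c j ^+ 2].
have Aub : ubound A (L2norm2 mu f).
  by move=> _ [js [ujs ->]]; exact: bessel.
have Aub' : has_ubound A by exists (L2norm2 mu f).
have Ane : A !=set0 by exists 0, [::]; split => //; rewrite big_nil.
have Asup : has_sup A by split.
pose s := sup A.
have Ale js : uniq js -> \sum_(j <- js) c j ^+ 2 <= s.
  by move=> ujs; apply: (ub_le_sup Aub'); exists js.
have hch (k : nat) : exists js, uniq js /\ s - (8^-1) ^+ k < \sum_(j <- js) c j ^+ 2.
  have q0 : 0 < (8^-1 : R) ^+ k by rewrite exprn_gt0// invr_gt0.
  have [r [js [ujs ->]] hr] := sup_adherent q0 Asup.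
  by exists js.
have [ch hch'] := choice hch.
have chu n : uniq (ch n) by case: (hch' n).
pose J := nest ch.
have Ju k : uniq (J k) by exact: nest_uniq.
have Jlow k : s - (8^-1) ^+ k < \sum_(j <- J k) c j ^+ 2.
  case: (hch' k) => _ h; apply: lt_le_trans h _.
  apply: sum_subset_le => //; first exact: nest_sub.
  by move=> i; exact: sqr_ge0.
pose S k := comb e (J k) c.
have SL2 k : L2 mu (S k) by exact: L2_comb.
have hD k : L2norm2 mu (fun x => S k.+1 x - S k x) <= (8^-1) ^+ k.
  pose nw := [seq j <- ch k.+1 | j \notin J k].
  have nwu : uniq nw by exact: filter_uniq.
  have -> : (fun x => S k.+1 x - S k x) = comb e nw c.
    by apply: funext => x; rewrite /S /comb /nw /= big_cat /=; ring.
  rewrite L2norm2_ip ip_comb_comb//.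
  rewrite [X in X <= _](eq_bigr (fun j => c j ^+ 2)); last by move=> j _; rewrite expr2.
  have := Ale _ (Ju k.+1); rewrite /= big_cat /= -/J -/nw.
  have := Jlow k.
  lra.
have [G [hG hGk]] := L2_limit SL2 hD.
have cG i : coef mu e G i = c i.
  have h k : (coef mu e G i - c i) ^+ 2 <= 32 * (4^-1) ^+ k.
    have h1 := coef_sqr_le heL2 hee1 hee0 i (L2B hG (SL2 k)).
    rewrite /coef ipBl// -/(coef mu e G i) in h1.
    rewrite /S ip_comb_e// in h1.
    have h2 : (c i - (if i \in J k then c i else 0)) ^+ 2 <= 8 * (4^-1) ^+ k.
      case: ifP => iJ; first by rewrite subrr expr0n /= mulr_ge0// exprn_ge0// invr_ge0.
      have u : uniq (i :: J k) by rewrite /= iJ Ju.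
      have := Ale _ u; rewrite big_cons; have := Jlow k.
      have := pow8_le_pow4 R k.
      have : 0 <= (4^-1 : R) ^+ k by rewrite exprn_ge0// invr_ge0.
      rewrite subr0; lra.
    have := hGk k.
    set a := coef mu e G i in h1 *; set b := (if i \in J k then c i else 0) in h1 h2 *.
    move=> h3.
    have : (a - c i) ^+ 2 <= 2 * (a - b) ^+ 2 + 2 * (c i - b) ^+ 2.
      have := sqr_ge0 (a - b + (c i - b)); nra.
    lra.
  have := small_le0 h; rewrite le_eqVlt ltNge sqr_ge0 orbF sqrf_eq0 subr_eq0.
  by move/eqP.
have hfG : {ae mu, forall x, f x - G x = 0}.
  apply: hcompl; first exact: L2B.
  by move=> i; rewrite ipBl// -/(coef mu e G i) cG subrr.
have eqn k : L2norm2 mu (fun x => f x - S k x) = L2norm2 mu (fun x => G x - S k x).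
  rewrite /L2norm2 /Rintegral; congr fine; apply: ae_eq_integral => //.
  - apply/measurable_EFinP; apply: measurable_funX; apply: measurable_funB.
      exact: L2_meas hf.
    exact: L2_meas (SL2 k).
  - apply/measurable_EFinP; apply: measurable_funX; apply: measurable_funB.
      exact: L2_meas hG.
    exact: L2_meas (SL2 k).
  apply: filterS hfG => x /= hx _.
  by move/eqP: hx; rewrite subr_eq0 => /eqP ->.
have [k hk] : exists k, 8 * (4^-1) ^+ k <= eps.
  apply: contrapT => hne.
  have : eps <= 0.
    apply: (small_le0 (C := 8)) => k; rewrite leNgt; apply/negP => hk.
    by apply: hne; exists k; exact: ltW.
  lra.
exists (J k); split => //.
by rewrite eqn; apply: le_trans (hGk k) hk.
Qed.

End Parseval.

Lemma coef_ineq (R : realType) (lam sig s c : R) : 0 < lam -> 0 <= sig -> 0 <= s <= 1 ->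
  c * (lam / (sig + lam) * c) <= lam `^ s * (((sig + lam) `^ (- (s / 2)) * c) ^+ 2).
Proof.
move=> l0 s0 /andP[s0' s1].
have p0 : 0 < sig + lam by lra.
have x0 : 0 < lam / (sig + lam) by rewrite divr_gt0.
have x1 : lam / (sig + lam) <= 1 by rewrite ler_pdivrMr// mul1r; lra.
have hx : lam / (sig + lam) <= (lam / (sig + lam)) `^ s.
  by apply: ger1_powR => //; rewrite x0 x1.
have E : lam `^ s * (((sig + lam) `^ (- (s / 2)) * c) ^+ 2) =
         (lam / (sig + lam)) `^ s * c ^+ 2.
  rewrite exprMn expr2 -powRD; last by apply/implyP => _; rewrite gt_eqF.
  rewrite (_ : - (s / 2) + - (s / 2) = - s); last by field.
  rewrite (powRM s (ltW l0)); last by rewrite invr_ge0 ltW.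
  rewrite powRN mulrA; congr (_ * _ * _).
  by rewrite -[(sig + lam)^-1](powR_inv1 (ltW p0)) -powRrM mulN1r powRN.
rewrite E (_ : c * (lam / (sig + lam) * c) = lam / (sig + lam) * c ^+ 2); last by ring.
by rewrite ler_wpM2r// sqr_ge0.
Qed.

Unset Implicit Arguments.

Theorem mainTheorem18 (d : measure_display) (T : measurableType d) (R : realType)
  (k : T -> T -> R) (lambda : R) (a b : R)
  (F : {finite_measure set T -> \bar R} -> R)
  (dF : {finite_measure set T -> \bar R} -> T -> R)
  (mu : R -> {finite_measure set T -> \bar R})
  (I : R -> Type) (sigma : forall t, I t -> R) (e : forall t, I t -> T -> R)
  (v : R -> T -> R) :
  sym_pd_bounded_kernel k ->
  0 < lambda ->
  (* first variation lies in L^2 *)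
  (forall t, t \in `]a, b[ -> L2 (mu t) (dF (mu t))) ->
  (* spectral decomposition of K_{mu_t} *)
  (forall t, t \in `]a, b[ ->
     spectral_decomposition k (mu t) (sigma t) (e t)) ->
  (* chain rule: d/dt F(mu(t)) = int dF/dmu d(dot mu) *)
  (forall t rho, t \in `]a, b[ -> L2 (mu t) rho ->
     measure_deriv_density mu t rho ->
     is_derive t 1 (fun tau => F (mu tau))
       (\int[mu t]_x (dF (mu t) x * rho x))) ->
  (* v_t = (K_{mu_t} + lambda I)^{-1} K_{mu_t} dF/dmu[mu_t] *)
  (forall t, t \in `]a, b[ ->
     spectral_apply (mu t) (sigma t) (e t) (fun r => r / (r + lambda))
       (dF (mu t)) (v t)) ->
  (* the flow: dot mu_t = - mu_t v_t *)
  (forall t, t \in `]a, b[ -> measure_deriv_density mu t (fun x => - v t x)) ->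
  forall t, t \in `]a, b[ ->
  forall s : R, 0 <= s <= 1 ->
  forall h : T -> R,
    (* h = (K_{mu_t} + lambda I)^{-s/2} dF/dmu[mu_t] *)
    spectral_apply (mu t) (sigma t) (e t) (fun r => (r + lambda) `^ (- (s / 2)))
      (dF (mu t)) h ->
    derive1 (fun tau => F (mu tau)) t <=
      - L2norm2 (mu t) (dF (mu t)) + lambda `^ s * L2norm2 (mu t) h.
Proof.
move=> hk lam0 hdF hspec hchain hv hflow t ht s hs h hh.
have [hsig0 [heL2 [hee1 [hee0 [_ hcompl]]]]] := hspec t ht.
pose J := {classic (I t)}.
pose ee : J -> T -> R := e t.
have heL2' : forall i : J, L2 (mu t) (ee i) := heL2.
have hee1' : forall i : J, ip (mu t) (ee i) (ee i) = 1 := fun i => hee1 i i erefl.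
have hee0' : forall i j : J, i != j -> ip (mu t) (ee i) (ee j) = 0.
  by move=> i j /eqP hij; exact: hee0.
have hcompl' : forall f, L2 (mu t) f -> (forall i : J, ip (mu t) f (ee i) = 0) ->
    {ae mu t, forall x, f x = 0} := fun f hf hz => hcompl f hf hz.
set g := dF (mu t).
have hg : L2 (mu t) g := hdF t ht.
have [hvL2 hvc] := hv t ht.
have [hhL2 hhc] := hh.
have hnv : L2 (mu t) (fun x => - v t x).
  rewrite (_ : (fun x => - v t x) = fun x => -1 * v t x).
    exact: L2Z.
  by apply: funext => x; rewrite mulN1r.
have hder := hchain t _ ht hnv (hflow t ht).
rewrite derive1E (@derive_val _ _ _ _ _ _ _ hder).
have -> : \int[mu t]_x (g x * - v t x) = - ip (mu t) g (v t).
  rewrite -mulN1r -ipZr//; apply: eq_Rintegral => x _; rewrite -/g; ring.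
pose w := fun x => g x - v t x.
have hw : L2 (mu t) w by exact: L2B.
have hgw : ip (mu t) g w = ip (mu t) g g - ip (mu t) g (v t) by rewrite ipBr.
suff key : ip (mu t) g w <= lambda `^ s * L2norm2 (mu t) h.
  by rewrite L2norm2_ip; lra.
pose c := coef (mu t) ee g.
have cw (j : J) : coef (mu t) ee w j = lambda / (sigma t j + lambda) * c j.
  rewrite /coef ipBl// hvc -/g -/(c j).
  have : sigma t j + lambda != 0 by rewrite gt_eqF//; have := hsig0 j; lra.
  by move=> hne; rewrite /c /coef /ee; field.
apply/ler_addgt0Pr => eta eta0.
pose W := ip (mu t) w w.
have W0 : 0 <= W by exact: ip_ge0.
have eps0 : 0 < eta ^+ 2 / (W + 1) by rewrite divr_gt0// ?exprn_gt0//; lra.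
have [js [ujs hjs]] := parseval_approx heL2' hee1' hee0' hcompl' hg eps0.
pose S := comb ee js c.
have hS : L2 (mu t) S by exact: L2_comb.
pose A := fun x => g x - S x.
have hA : L2 (mu t) A by exact: L2B.
have split : ip (mu t) g w = ip (mu t) A w + ip (mu t) S w.
  rewrite -ipDl//; congr ip; apply: funext => x; rewrite /A; ring.
have hSw : ip (mu t) S w <= lambda `^ s * L2norm2 (mu t) h.
  rewrite /S ip_comb_f//.
  apply: le_trans (_ : lambda `^ s * \sum_(j <- js) coef (mu t) ee h j ^+ 2 <= _).
    rewrite mulr_sumr; apply: ler_sum => j _.
    rewrite cw /coef hhc -/g -/(c j).
    by apply: coef_ineq => //; exact: hsig0.
  by rewrite ler_wpM2l ?powR_ge0// bessel.
have hAw : ip (mu t) A w <= eta.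
  pose tau := (W + 1) / eta.
  have tau0 : 0 < tau by rewrite divr_gt0//; lra.
  have := ip_AMGM hA hw tau0; rewrite -/W.
  have hAA : ip (mu t) A A <= eta ^+ 2 / (W + 1) by rewrite -L2norm2_ip.
  have e1 : tau * (eta ^+ 2 / (W + 1)) = eta by rewrite /tau; field; lra.
  have e2 : W / tau <= eta.
    rewrite /tau invf_div mulrA ler_pdivrMr; last lra.
    nra.
  have := ler_wpM2l (ltW tau0) hAA; rewrite e1.
  lra.
lra.
Qed.
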